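(* Let $m, n \ge 0$ be integers. If each of the $2 \times m$ and $2 \times n$ Domineering boards has outcome ${\rm 2nd}$ or $V$, then the $2 \times (m+n+1)$ board has outcome ${\rm 1st}$ or $V$ (i.e. Vera wins the $2\times(m+n+1)$ board whenever she moves first).
   Context: Domineering on an $a \times b$ board (a rectangle of $a$ rows and $b$ columns of unit cells): two players, Vera and Hepzibah, alternately place dominoes on empty cells; Vera places vertical dominoes (covering two vertically adjacent empty cells), Hepzibah places horizontal dominoes (covering two horizontally adjacent empty cells). A player who cannot move on her turn loses. The outcome class is $V$ if Vera wins with optimal play regardless of who moves first, $H$ if Hepzibah wins regardless of who moves first, ${\rm 1st}$ if the first player wins, and ${\rm 2nd}$ if the second player wins. The $2\times 0$ board is the empty board. *)

(* Defs.v *)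
From mathcomp Require Import all_boot.
Set Implicit Arguments. Unset Strict Implicit. Unset Printing Implicit Defensive.

(* Domineering on an a x b board: cells are (row, column) in 'I_a * 'I_b.
   A position is the set of occupied cells. *)
Definition cell (a b : nat) := ('I_a * 'I_b)%type.

Definition vdomino a b (c1 c2 : cell a b) : bool :=
  ((c1.1 : nat).+1 == c2.1) && (c1.2 == c2.2).
Definition hdomino a b (c1 c2 : cell a b) : bool :=
  (c1.1 == c2.1) && ((c1.2 : nat).+1 == c2.2).

Definition legal a b (vera : bool) (S : {set cell a b}) (c1 c2 : cell a b) : bool :=
  [&& (if vera then vdomino c1 c2 else hdomino c1 c2), c1 \notin S & c2 \notin S].

(* [win k vera S]: the player to move (Vera iff [vera]) wins from position S
   (normal play: a player unable to move loses), computed with fuel k. *)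
Fixpoint win a b (k : nat) (vera : bool) (S : {set cell a b}) : bool :=
  match k with
  | 0 => false
  | k'.+1 => [exists c1 : cell a b, exists c2 : cell a b,
               legal vera S c1 c2 && ~~ win k' (~~ vera) (S :|: [set c1; c2])]
  end.

(* Each move occupies two new cells, so at most #|cell a b| moves are ever made;
   fuel #|cell a b|.+1 is therefore sufficient and gives the true game value. *)
Definition first_player_wins (a b : nat) (vera : bool) : bool :=
  @win a b #|{: cell a b}|.+1 vera set0.

Inductive outcome := OV | OH | O1st | O2nd.

Definition domineering_outcome (a b : nat) : outcome :=
  match first_player_wins a b true, first_player_wins a b false with
  | true, true => O1st
  | false, false => O2nd
  | true, false => OV
  | false, true => OH
  end.

(* Main.v *)
Require Import Defs.
From mathcomp Require Import all_boot.
From mathcomp Require Import zify.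
Set Implicit Arguments. Unset Strict Implicit. Unset Printing Implicit Defensive.

Lemma card_step a b (S X : {set cell a b}) x :
  x \notin S -> x \in X -> #|~: (S :|: X)| < #|~: S|.
Proof.
move=> xS xX; apply: proper_card; rewrite properE setCS ?subsetUl //=.
apply/subsetPn; exists x; by rewrite !inE ?xS ?xX ?orbT.
Qed.

Lemma win_fuel a b : forall k1 k2 v (S : {set cell a b}),
  #|~:S| < k1 -> #|~:S| < k2 -> win k1 v S = win k2 v S.
Proof.
elim=> [|k1 IH] [|k2] v S //= h1 h2.
apply: eq_existsb => c1; apply: eq_existsb => c2.
case L: (legal v S c1 c2) => //=. congr negb.
move: L; rewrite /legal => /and3P [_ h _].
have lt := @card_step _ _ _ [set c1; c2] _ h (set21 _ _).
apply: IH; apply: leq_trans lt _; by [].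
Qed.

Definition W a b v (S : {set cell a b}) := win (#|~:S|.+1) v S.

Lemma WE a b v (S : {set cell a b}) : W v S =
  [exists c1, exists c2, legal v S c1 c2 && ~~ W (~~v) (S :|: [set c1; c2])].
Proof.
rewrite {1}/W. apply: eq_existsb => c1; apply: eq_existsb => c2.
case L: (legal v S c1 c2) => //. rewrite !andTb. congr negb.
move: L; rewrite /legal => /and3P [_ h _].
have lt := @card_step _ _ _ [set c1; c2] _ h (set21 _ _).
rewrite /W; apply: win_fuel => //; apply: leq_trans lt _; exact: leqnSn.
Qed.

Lemma fpw a b v : first_player_wins a b v = W v (set0 : {set cell a b}).
Proof. by rewrite /first_player_wins /W setC0 cardsT. Qed.

Definition pre k N (f : cell 2 k -> cell 2 N) (S : {set cell 2 N}) : {set cell 2 k} :=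
  [set d | f d \in S].

Lemma in_pre k N (f : cell 2 k -> cell 2 N) S d : (d \in pre f S) = (f d \in S).
Proof. by rewrite inE. Qed.

Lemma pre_add k N (f : cell 2 k -> cell 2 N) (finj : injective f) S a b :
  pre f (S :|: [set f a; f b]) = pre f S :|: [set a; b].
Proof. by apply/setP => d; rewrite !inE !(inj_eq finj). Qed.

Lemma pre_add0 k k' N (f : cell 2 k -> cell 2 N) (g : cell 2 k' -> cell 2 N)
  (disj : forall x y, f x != g y) S a b :
  pre f (S :|: [set g a; g b]) = pre f S.
Proof. by apply/setP => d; rewrite !inE !(negbTE (disj _ _)) !orbF. Qed.

Lemma respond k N (f : cell 2 k -> cell 2 N) (finj : injective f)
 (fv : forall e1 e2, vdomino e1 e2 -> vdomino (f e1) (f e2))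
 (fh : forall d1 d2, hdomino (f d1) (f d2) -> hdomino d1 d2) S d1 d2 :
 ~~ W false (pre f S) -> hdomino (f d1) (f d2) -> f d1 \notin S -> f d2 \notin S ->
 exists e1 e2, legal true (S :|: [set f d1; f d2]) (f e1) (f e2) &&
   ~~ W false (pre f S :|: [set d1; d2] :|: [set e1; e2]).
Proof.
move=> hW hh n1 n2.
have : W true (pre f S :|: [set d1; d2]).
  apply: contraNT hW => hn. rewrite WE; apply/existsP; exists d1; apply/existsP; exists d2.
  by rewrite /legal /= fh // !in_pre n1 n2.
rewrite WE => /existsP [e1 /existsP [e2 /andP [hl hw]]]. exists e1, e2.
rewrite hw andbT. move: hl; rewrite /legal => /and3P [hv ne1 ne2].
have E := pre_add finj S d1 d2.
rewrite -E in_pre in ne1; rewrite -E in_pre in ne2.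
by rewrite fv // ne1 ne2.
Qed.

Unset Implicit Arguments.
Lemma ltL m n (i : 'I_m) : (i : nat) < m+n+1.
Proof. have := ltn_ord i; lia. Qed.
Definition Lc m n (d : cell 2 m) : cell 2 (m+n+1) := (d.1, Ordinal (ltL m n d.2)).
Lemma ltR m n (i : 'I_n) : i + m.+1 < m+n+1.
Proof. have := ltn_ord i; lia. Qed.
Definition Rc m n (d : cell 2 n) : cell 2 (m+n+1) := (d.1, Ordinal (ltR m n d.2)).

Lemma Lc_inj m n : injective (Lc m n).
Proof. move=> [r1 c1] [r2 c2] [-> h]; congr pair; exact: val_inj. Qed.
Lemma Rc_inj m n : injective (Rc m n).
Proof. move=> [r1 c1] [r2 c2] [-> h]; congr pair; apply: val_inj => /=; lia. Qed.
Lemma LRd m n x y : Lc m n x != Rc m n y.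
Proof. apply/eqP => -[_ h]; have := ltn_ord x.2; lia. Qed.
Lemma RLd m n x y : Rc m n x != Lc m n y.
Proof. by rewrite eq_sym LRd. Qed.

Lemma Lc_v m n e1 e2 : vdomino e1 e2 -> vdomino (Lc m n e1) (Lc m n e2).
Proof.
case: e1 e2 => r1 c1 [r2 c2]; rewrite /vdomino /= -!val_eqE /= => /andP [-> /eqP ->].
by rewrite eqxx.
Qed.
Lemma Rc_v m n e1 e2 : vdomino e1 e2 -> vdomino (Rc m n e1) (Rc m n e2).
Proof.
case: e1 e2 => r1 c1 [r2 c2]; rewrite /vdomino /= -!val_eqE /= => /andP [-> /eqP ->].
by rewrite eqxx.
Qed.
Lemma Lc_h m n d1 d2 : hdomino (Lc m n d1) (Lc m n d2) -> hdomino d1 d2.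
Proof. by case: d1 d2 => r1 c1 [r2 c2]. Qed.
Lemma Rc_h m n d1 d2 : hdomino (Rc m n d1) (Rc m n d2) -> hdomino d1 d2.
Proof.
case: d1 d2 => r1 c1 [r2 c2]; rewrite /hdomino /= => /andP [-> /eqP h] /=.
apply/eqP; lia.
Qed.

Lemma split_h m n (c1 c2 : cell 2 (m+n+1)) : hdomino c1 c2 ->
  (c1.2:nat) != m -> (c2.2:nat) != m ->
  (exists d1 d2, c1 = Lc m n d1 /\ c2 = Lc m n d2) \/
  (exists d1 d2, c1 = Rc m n d1 /\ c2 = Rc m n d2).
Proof.
case: c1 => r1 [j1 h1]; case: c2 => r2 [j2 h2]; rewrite /hdomino /= => /andP [_ /eqP e] n1 n2.
case: (ltnP j1 m) => hj.
- left. have hj2 : j2 < m by lia.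
  exists (r1, Ordinal hj), (r2, Ordinal hj2); split; congr pair; exact: val_inj.
- right. have hj1 : j1 - m.+1 < n by lia. have hj2 : j2 - m.+1 < n by lia.
  exists (r1, Ordinal hj1), (r2, Ordinal hj2); split; congr pair; apply: val_inj => /=; lia.
Qed.

Lemma inv m n : forall k (S : {set cell 2 (m+n+1)}), #|~:S| < k ->
  (forall c : cell 2 (m+n+1), (c.2:nat) = m -> c \in S) ->
  ~~ W false (pre (Lc m n) S) -> ~~ W false (pre (Rc m n) S) -> ~~ W false S.
Proof.
elim=> [|k IH] S // hk hcol hL hR.
rewrite WE; apply/existsP => -[c1 /existsP [c2 /andP [hl hw]]].
move: hl; rewrite /legal /= => /and3P [hh n1 n2].
have m1 : (c1.2:nat) != m by apply/eqP => e; move: n1; rewrite hcol.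
have m2 : (c2.2:nat) != m by apply/eqP => e; move: n2; rewrite hcol.
case: (split_h m n c1 c2 hh m1 m2) => [[d1 [d2 [e1 e2]]] | [d1 [d2 [e1 e2]]]]; subst c1 c2.
- have [f1 [f2 /andP [hl2 hw2]]] := respond (Lc_inj m n) (Lc_v m n) (Lc_h m n) hL hh n1 n2.
  move/negP: hw; apply. rewrite WE; apply/existsP; exists (Lc m n f1); apply/existsP; exists (Lc m n f2).
  rewrite hl2 /=. move: (hl2); rewrite /legal => /and3P [_ o1 _].
  apply: IH.
  + have a1 := @card_step _ _ _ [set Lc m n f1; Lc m n f2] _ o1 (set21 _ _).
    have a2 := @card_step _ _ _ [set Lc m n d1; Lc m n d2] _ n1 (set21 _ _).
    lia.
  + by move=> c /hcol; rewrite !inE => ->.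
  + by rewrite !pre_add //; apply: Lc_inj.
  + by rewrite !pre_add0 //; apply: RLd.
- have [f1 [f2 /andP [hl2 hw2]]] := respond (Rc_inj m n) (Rc_v m n) (Rc_h m n) hR hh n1 n2.
  move/negP: hw; apply. rewrite WE; apply/existsP; exists (Rc m n f1); apply/existsP; exists (Rc m n f2).
  rewrite hl2 /=. move: (hl2); rewrite /legal => /and3P [_ o1 _].
  apply: IH.
  + have a1 := @card_step _ _ _ [set Rc m n f1; Rc m n f2] _ o1 (set21 _ _).
    have a2 := @card_step _ _ _ [set Rc m n d1; Rc m n d2] _ n1 (set21 _ _).
    lia.
  + by move=> c /hcol; rewrite !inE => ->.
  + by rewrite !pre_add0 //; apply: LRd.
  + by rewrite !pre_add //; apply: Rc_inj.
Qed.

Lemma ltM m n : m < m+n+1.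
Proof. lia. Qed.

Lemma col_neq a b (c c' : cell a b) : (c.2:nat) != (c'.2:nat) -> c != c'.
Proof. by apply: contraNneq => ->. Qed.

Lemma hyp2 k : (domineering_outcome 2 k = O2nd \/ domineering_outcome 2 k = OV) ->
  ~~ W false (set0 : {set cell 2 k}).
Proof.
rewrite /domineering_outcome !fpw.
by case: (W true _); case: (W false _) => //; case.
Qed.

Theorem mainTheorem9 (m n : nat) :
  (domineering_outcome 2 m = O2nd \/ domineering_outcome 2 m = OV) ->
  (domineering_outcome 2 n = O2nd \/ domineering_outcome 2 n = OV) ->
  (domineering_outcome 2 (m + n + 1) = O1st \/ domineering_outcome 2 (m + n + 1) = OV).
Proof.
move=> /hyp2 hm /hyp2 hn.
rewrite /domineering_outcome !fpw.
set c1 : cell 2 (m+n+1) := (ord0, Ordinal (ltM m n)).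
set c2 : cell 2 (m+n+1) := (ord_max, Ordinal (ltM m n)).
have -> : W true (set0 : {set cell 2 (m+n+1)}) = true.
  rewrite WE; apply/existsP; exists c1; apply/existsP; exists c2.
  rewrite /legal !inE /= /vdomino !eqxx /=.
  apply: (@inv m n (#|~: (set0 :|: [set c1; c2])|.+1)) => //.
  + case=> r j /= e; rewrite !inE; case: r => -[|[|r]] hr //.
    * by rewrite /c1 /c2 !xpair_eqE -!val_eqE /= e eqxx.
    * by rewrite /c1 /c2 !xpair_eqE -!val_eqE /= e eqxx.
  + suff -> : pre (Lc m n) (set0 :|: [set c1; c2]) = set0 by [].
    apply/setP => d; rewrite !inE /c1 /c2 /= !xpair_eqE -!val_eqE /=.
    have h : ((d.2 : nat) == m) = false by apply/eqP; have := ltn_ord d.2; lia.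
    by rewrite h !andbF.
  + suff -> : pre (Rc m n) (set0 :|: [set c1; c2]) = set0 by [].
    apply/setP => d; rewrite !inE /c1 /c2 /= !xpair_eqE -!val_eqE /=.
    have h : ((d.2 : nat) + m.+1 == m) = false by apply/eqP; lia.
    by rewrite h !andbF.
by case: (W false _); [left | right].
Qed.
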